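(* Let $N\ge 2$ be an integer and $\kappa,m>0$. For every fixed $k_1\in\mathbb{Z}\cap(0,N)$, $$\sum_{\substack{k_2,k_3,k_4\in\mathbb{Z}\cap(0,N)\\ k_1-k_2-k_3-k_4\equiv 0\ (\mathrm{mod}\ N)}}\big|A^{(1)}_{1,2,3,4}\big|^2+\sum_{\substack{k_2,k_3,k_4\in\mathbb{Z}\cap(0,N)\\ k_1-k_2+k_3+k_4\equiv 0\ (\mathrm{mod}\ N)}}\big|A^{(2)}_{1,2,3,4}\big|^2+\sum_{\substack{k_2,k_3,k_4\in\mathbb{Z}\cap(0,N)\\ k_1+k_2+k_3+k_4\equiv 0\ (\mathrm{mod}\ N)}}\big|A^{(3)}_{1,2,3,4}\big|^2\le C\,N^2\log N,$$ where $C>0$ is a constant depending only on $\kappa$ and $m$ (in particular independent of $N$ and $k_1$).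
   Context: For an integer $N\ge 2$ and constants $\kappa,m>0$, define for $k\in\mathbb{Z}$ the frequency $\omega_k=2\sqrt{\kappa/m}\,\big|\sin(\pi k/N)\big|$ and the $2N$-periodic sign function $\iota(x)=\operatorname{sgn}\sin(\pi x/N)$. For integers $k_1,k_2,k_3,k_4$ (abbreviated by their indices $1,2,3,4$) set $$T_{1,2,3,4}=-\frac{3}{4\kappa^2}\,\iota(k_2+k_3+k_4)\,\iota(k_2)\,\iota(k_3)\,\iota(k_4)\prod_{i=1}^4\sqrt{\omega_{k_i}},$$ and let $T_{1,-2,3,4}$ denote the same expression with $k_2$ replaced by $-k_2$, i.e. $-\frac{3}{4\kappa^2}\iota(-k_2+k_3+k_4)\iota(-k_2)\iota(k_3)\iota(k_4)\prod_{i=1}^4\sqrt{\omega_{k_i}}$. Define $$A^{(1)}_{1,2,3,4}=-\frac{T_{1,2,3,4}}{\omega_{k_1}-\omega_{k_2}-\omega_{k_3}-\omega_{k_4}},\quad A^{(2)}_{1,2,3,4}=-\frac{T_{1,-2,3,4}}{\omega_{k_1}-\omega_{k_2}+\omega_{k_3}+\omega_{k_4}},\quad A^{(3)}_{1,2,3,4}=-\frac{T_{1,2,3,4}}{\omega_{k_1}+\omega_{k_2}+\omega_{k_3}+\omega_{k_4}}.$$ On the respective summation ranges (all $k_i\in\mathbb{Z}\cap(0,N)$ with the stated congruence mod $N$) the denominators do not vanish. These are the coefficients of the normal form transformation removing non-resonant quartic terms in the $\beta$-FPUT chain. *)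

(* Defs.v *)
From Stdlib Require Import Reals ZArith List.
Open Scope R_scope.

Definition sgn (r : R) : R :=
  if Rlt_dec 0 r then 1 else if Rlt_dec r 0 then -1 else 0.

Definition omega (kappa m : R) (N k : Z) : R :=
  2 * sqrt (kappa / m) * Rabs (sin (PI * IZR k / IZR N)).

Definition iota (N x : Z) : R := sgn (sin (PI * IZR x / IZR N)).

Definition T (kappa m : R) (N k1 k2 k3 k4 : Z) : R :=
  - (3 / (4 * kappa ^ 2)) * iota N (k2 + k3 + k4) * iota N k2 * iota N k3 * iota N k4
  * (sqrt (omega kappa m N k1) * sqrt (omega kappa m N k2)
     * sqrt (omega kappa m N k3) * sqrt (omega kappa m N k4)).

Definition A1 kappa m N k1 k2 k3 k4 : R :=
  - T kappa m N k1 k2 k3 k4 /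
    (omega kappa m N k1 - omega kappa m N k2 - omega kappa m N k3 - omega kappa m N k4).

Definition A2 kappa m N k1 k2 k3 k4 : R :=
  - T kappa m N k1 (- k2)%Z k3 k4 /
    (omega kappa m N k1 - omega kappa m N k2 + omega kappa m N k3 + omega kappa m N k4).

Definition A3 kappa m N k1 k2 k3 k4 : R :=
  - T kappa m N k1 k2 k3 k4 /
    (omega kappa m N k1 + omega kappa m N k2 + omega kappa m N k3 + omega kappa m N k4).

Definition range (N : Z) : list Z :=
  map Z.of_nat (seq 1 (Z.to_nat N - 1)).

Definition sumZ (l : list Z) (f : Z -> R) : R := fold_right Rplus 0 (map f l).

Definition sum3 (N : Z) (c : Z -> Z -> Z -> Z) (f : Z -> Z -> Z -> R) : R :=
  sumZ (range N) (fun k2 => sumZ (range N) (fun k3 => sumZ (range N) (fun k4 =>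
    if Z.eq_dec (Z.modulo (c k2 k3 k4) N) 0 then f k2 k3 k4 else 0))).

Definition Ssum (kappa m : R) (N k1 : Z) : R :=
  sum3 N (fun k2 k3 k4 => k1 - k2 - k3 - k4)%Z
       (fun k2 k3 k4 => Rabs (A1 kappa m N k1 k2 k3 k4) ^ 2)
  + sum3 N (fun k2 k3 k4 => k1 - k2 + k3 + k4)%Z
       (fun k2 k3 k4 => Rabs (A2 kappa m N k1 k2 k3 k4) ^ 2)
  + sum3 N (fun k2 k3 k4 => k1 + k2 + k3 + k4)%Z
       (fun k2 k3 k4 => Rabs (A3 kappa m N k1 k2 k3 k4) ^ 2).

(* Main.v *)
Require Import Defs.
From Stdlib Require Import Reals ZArith.
From Stdlib Require Import Lra Lia Psatz List.
Open Scope R_scope.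


Lemma Pid : forall A B C, sin A + sin B + sin C - sin (A+B+C) =
  4 * sin ((A+B)/2) * sin ((B+C)/2) * sin ((A+C)/2).
Proof.
  intros A B C.
  replace (sin A + sin B + sin C - sin (A+B+C)) with
    ((sin A + sin B) + (sin C - sin (A+B+C))) by ring.
  rewrite form3, form4.
  replace ((C - (A + B + C)) / 2) with (- ((A+B)/2)) by field.
  rewrite sin_neg.
  replace ((C + (A + B + C)) / 2) with ((A+B)/2 + C) by field.
  replace (2 * cos ((A - B) / 2) * sin ((A + B) / 2) +
   2 * cos ((A + B) / 2 + C) * - sin ((A + B) / 2)) with
   (2 * sin ((A + B) / 2) * (cos ((A - B) / 2) - cos ((A + B) / 2 + C))) by ring.
  rewrite form2.
  replace (((A - B) / 2 - ((A + B) / 2 + C)) / 2) with (- ((B+C)/2)) by field.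
  replace (((A - B) / 2 + ((A + B) / 2 + C)) / 2) with ((A+C)/2) by field.
  rewrite sin_neg. ring.
Qed.

Lemma concav : forall a b, 0 <= sin ((a+b)/2) -> (sin a + sin b)/2 <= sin ((a+b)/2).
Proof.
  intros a b H. rewrite form3. pose proof (COS_bound ((a-b)/2)). nra.
Qed.

Lemma half_le : forall z, 0 <= z <= PI -> sin z <= 2 * sin (z/2).
Proof.
  intros z Hz. replace z with (2 * (z/2)) at 1 by field. rewrite sin_2a.
  assert (0 <= sin (z/2)) by (apply sin_ge_0; lra).
  pose proof (COS_bound (z/2)). nra.
Qed.

Lemma sin_mono : forall x y, 0 <= x -> x <= y -> y <= PI/2 -> sin x <= sin y.
Proof. intros. apply sin_incr_1; pose proof PI_RGT_0; lra. Qed.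

Lemma sin_nn : forall z, 0 <= z <= PI/2 -> 0 <= sin z.
Proof. intros. apply sin_ge_0; pose proof PI_RGT_0; lra. Qed.

Lemma pair_ge1 : forall z z', 0 <= z <= PI/2 -> 0 <= z' <= PI/2 -> PI/2 <= z + z' ->
  1 <= sin z + sin z'.
Proof.
  intros z z' Hz Hz' Hs.
  assert (sin (PI/2 - z) <= sin z') by (apply sin_mono; lra).
  rewrite sin_shift in H.
  assert (0 <= cos z) by (apply cos_ge_0; lra).
  assert (0 <= sin z) by (apply sin_nn; lra).
  pose proof (sin2_cos2 z). rewrite !Rsqr_pow2 in H2. nra.
Qed.

Definition prod3 (a b c : R) := (a + b) * (b + c) * (a + c).

Lemma Lppp : forall z1 z2 z3, 0 <= z1 <= PI/2 -> 0 <= z2 <= PI/2 -> 0 <= z3 <= PI/2 ->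
  prod3 (sin z1) (sin z2) (sin z3) / 32 <= sin z1 + sin z2 + sin z3 - Rabs (sin (z1+z2+z3)).
Proof.
  intros z1 z2 z3 H1 H2 H3. unfold prod3.
  pose proof (sin_nn z1 H1); pose proof (sin_nn z2 H2); pose proof (sin_nn z3 H3).
  pose proof (SIN_bound z1); pose proof (SIN_bound z2); pose proof (SIN_bound z3).
  destruct (Rle_dec (z1+z2+z3) PI) as [Hw|Hw].
  - rewrite Rabs_right by (apply Rle_ge, sin_ge_0; lra).
    rewrite Pid.
    assert (E1: 0 <= sin ((z1+z2)/2)) by (apply sin_nn; lra).
    assert (E2: 0 <= sin ((z2+z3)/2)) by (apply sin_nn; lra).
    assert (E3: 0 <= sin ((z1+z3)/2)) by (apply sin_nn; lra).
    pose proof (concav z1 z2 E1); pose proof (concav z2 z3 E2); pose proof (concav z1 z3 E3).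
    assert ((sin z1 + sin z2)/2 * ((sin z2 + sin z3)/2) <= sin ((z1+z2)/2) * sin ((z2+z3)/2))
      by (apply Rmult_le_compat; lra).
    assert ((sin z1 + sin z2)/2 * ((sin z2 + sin z3)/2) * ((sin z1 + sin z3)/2) <=
            sin ((z1+z2)/2) * sin ((z2+z3)/2) * sin ((z1+z3)/2))
      by (apply Rmult_le_compat; try lra; apply Rmult_le_pos; lra).
    assert (0 <= (sin z1 + sin z2) * (sin z2 + sin z3) * (sin z1 + sin z3))
      by (repeat apply Rmult_le_pos; lra).
    lra.
  - pose proof (pair_ge1 z1 z2 H1 H2 ltac:(lra)).
    pose proof (pair_ge1 z2 z3 H2 H3 ltac:(lra)).
    pose proof (pair_ge1 z1 z3 H1 H3 ltac:(lra)).
    pose proof (SIN_bound (z1+z2+z3)).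
    assert (Rabs (sin (z1+z2+z3)) <= 1) by (apply Rabs_le; lra).
    assert ((sin z1 + sin z2) * (sin z2 + sin z3) <= 4) by nra.
    assert ((sin z1 + sin z2) * (sin z2 + sin z3) * (sin z1 + sin z3) <= 8) by nra.
    lra.
Qed.

Lemma quarter : forall z, 0 <= z <= PI/2 -> sin z / 4 <= sin (z/4).
Proof.
  intros z Hz. pose proof PI_RGT_0.
  pose proof (half_le z ltac:(lra)). pose proof (half_le (z/2) ltac:(lra)).
  replace (z/2/2) with (z/4) in H1 by field. lra.
Qed.

Lemma Lppm : forall z1 z2 z3, 0 <= z1 <= PI/2 -> 0 <= z2 <= PI/2 -> 0 <= z3 <= PI/2 ->
  prod3 (sin z1) (sin z2) (sin z3) / 32 <= sin z1 + sin z2 + sin z3 - Rabs (sin (z1+z2-z3)).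
Proof.
  intros z1 z2 z3 H1 H2 H3. unfold prod3. pose proof PI_RGT_0.
  pose proof (sin_nn z1 H1); pose proof (sin_nn z2 H2); pose proof (sin_nn z3 H3).
  pose proof (SIN_bound z1); pose proof (SIN_bound z2); pose proof (SIN_bound z3).
  assert (P4 : forall a b c, 0 <= a <= 1 -> 0 <= b <= 1 -> 0 <= c <= 1 ->
     (a+b)*(b+c)*(a+c) <= 4 * (a+b)).
  { intros a b c Ha Hb Hc. assert (0 <= (b+c)*(a+c) <= 4) by (split; nra). nra. }
  destruct (Rlt_dec (z1+z2-z3) 0) as [Hw|Hw].
  - replace (z1+z2-z3) with (-(z3-z1-z2)) by ring. rewrite sin_neg, Rabs_Ropp.
    rewrite Rabs_right by (apply Rle_ge, sin_nn; lra).
    assert (sin (z3-z1-z2) <= sin z3) by (apply sin_mono; lra).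
    pose proof (P4 (sin z1) (sin z2) (sin z3) ltac:(lra) ltac:(lra) ltac:(lra)). nra.
  - rewrite Rabs_right by (apply Rle_ge, sin_ge_0; lra).
    destruct (Rle_dec z1 z3) as [Ha|Ha].
    { assert (sin (z1+z2-z3) <= sin z2) by (apply sin_mono; lra).
      pose proof (P4 (sin z1) (sin z3) (sin z2) ltac:(lra) ltac:(lra) ltac:(lra)). nra. }
    destruct (Rle_dec z2 z3) as [Hb|Hb].
    { assert (sin (z1+z2-z3) <= sin z1) by (apply sin_mono; lra).
      pose proof (P4 (sin z2) (sin z3) (sin z1) ltac:(lra) ltac:(lra) ltac:(lra)). nra. }
    pose proof (Pid z1 z2 (-z3)) as E. rewrite sin_neg in E.
    replace (z1 + z2 + - z3) with (z1+z2-z3) in E by ring.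
    replace ((z2 + - z3)/2) with ((z2-z3)/2) in E by field.
    replace ((z1 + - z3)/2) with ((z1-z3)/2) in E by field.
    assert (E1: 0 <= sin ((z1+z2)/2)) by (apply sin_nn; lra).
    pose proof (concav z1 z2 E1).
    assert (G1: 0 <= sin ((z2-z3)/2)) by (apply sin_nn; lra).
    assert (G2: 0 <= sin ((z1-z3)/2)) by (apply sin_nn; lra).
    assert (S31: sin z3 <= sin z1) by (apply sin_mono; lra).
    assert (S32: sin z3 <= sin z2) by (apply sin_mono; lra).
    assert (Q: 0 <= sin ((z1+z2)/2) * sin ((z2-z3)/2) * sin ((z1-z3)/2))
      by (repeat apply Rmult_le_pos; lra).
    destruct (Rle_dec (2*z3) z1) as [Hc|Hc]; [destruct (Rle_dec (2*z3) z2) as [Hd|Hd]|].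
    + assert (sin (z1/4) <= sin ((z1-z3)/2)) by (apply sin_mono; lra).
      assert (sin (z2/4) <= sin ((z2-z3)/2)) by (apply sin_mono; lra).
      pose proof (quarter z1 H1); pose proof (quarter z2 H2).
      assert (sin z2 / 4 * (sin z1 / 4) <= sin ((z2-z3)/2) * sin ((z1-z3)/2))
        by (apply Rmult_le_compat; lra).
      assert ((sin z1 + sin z2)/2 * (sin z2 / 4 * (sin z1 / 4)) <=
              sin ((z1+z2)/2) * (sin ((z2-z3)/2) * sin ((z1-z3)/2)))
        by (apply Rmult_le_compat; try lra; apply Rmult_le_pos; lra).
      assert ((sin z2 + sin z3) <= 2 * sin z2) by lra.
      assert ((sin z1 + sin z3) <= 2 * sin z1) by lra.
      assert ((sin z1 + sin z2) * (sin z2 + sin z3) <= (sin z1 + sin z2) * (2 * sin z2)) by nra.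
      assert ((sin z1 + sin z2) * (sin z2 + sin z3) * (sin z1 + sin z3) <=
              (sin z1 + sin z2) * (2 * sin z2) * (2 * sin z1)).
      { apply Rmult_le_compat; try lra. apply Rmult_le_pos; lra. }
      lra.
    + assert (sin (z2/2) <= sin z3) by (apply sin_mono; lra).
      pose proof (half_le z2 ltac:(lra)).
      pose proof (P4 (sin z2) (sin z3) (sin z1) ltac:(lra) ltac:(lra) ltac:(lra)). nra.
    + assert (sin (z1/2) <= sin z3) by (apply sin_mono; lra).
      pose proof (half_le z1 ltac:(lra)).
      pose proof (P4 (sin z1) (sin z3) (sin z2) ltac:(lra) ltac:(lra) ltac:(lra)). nra.
Qed.


Lemma abs_sin_shift : forall u k, Rabs (sin (u + IZR k * PI)) = Rabs (sin u).
Proof.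
  intros u k. rewrite sin_plus.
  rewrite (sin_eq_0_1 (IZR k * PI)) by (exists k; reflexivity).
  rewrite Rmult_0_r, Rplus_0_r, Rabs_mult.
  pose proof (sin2_cos2 (IZR k * PI)). rewrite (sin_eq_0_1 (IZR k * PI)) in H by (exists k; reflexivity).
  rewrite !Rsqr_pow2 in H.
  assert (Rabs (cos (IZR k * PI)) = 1).
  { pose proof (Rabs_pos (cos (IZR k * PI))). pose proof (pow2_abs (cos (IZR k * PI))). nra. }
  rewrite H0. ring.
Qed.

Lemma prod3_perm1 : forall a b c, prod3 a c b = prod3 a b c.
Proof. intros; unfold prod3; ring. Qed.
Lemma prod3_perm2 : forall a b c, prod3 b c a = prod3 a b c.
Proof. intros; unfold prod3; ring. Qed.

Lemma Lz : forall z1 z2 z3 e1 e2 e3, 0 <= z1 <= PI/2 -> 0 <= z2 <= PI/2 -> 0 <= z3 <= PI/2 ->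
  (e1 = 1 \/ e1 = -1) -> (e2 = 1 \/ e2 = -1) -> (e3 = 1 \/ e3 = -1) ->
  prod3 (sin z1) (sin z2) (sin z3) / 32 <=
  sin z1 + sin z2 + sin z3 - Rabs (sin (e1*z1+e2*z2+e3*z3)).
Proof.
  intros z1 z2 z3 e1 e2 e3 H1 H2 H3 [->| ->] [->| ->] [->| ->].
  - replace (1*z1+1*z2+1*z3) with (z1+z2+z3) by ring. apply Lppp; auto.
  - replace (1*z1+1*z2+-1*z3) with (z1+z2-z3) by ring. apply Lppm; auto.
  - replace (1*z1+-1*z2+1*z3) with (z1+z3-z2) by ring.
    pose proof (Lppm z1 z3 z2 H1 H3 H2). rewrite prod3_perm1 in H. lra.
  - replace (1*z1+-1*z2+-1*z3) with (-(z2+z3-z1)) by ring. rewrite sin_neg, Rabs_Ropp.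
    pose proof (Lppm z2 z3 z1 H2 H3 H1). rewrite prod3_perm2 in H. lra.
  - replace (-1*z1+1*z2+1*z3) with (z2+z3-z1) by ring.
    pose proof (Lppm z2 z3 z1 H2 H3 H1). rewrite prod3_perm2 in H. lra.
  - replace (-1*z1+1*z2+-1*z3) with (-(z1+z3-z2)) by ring. rewrite sin_neg, Rabs_Ropp.
    pose proof (Lppm z1 z3 z2 H1 H3 H2). rewrite prod3_perm1 in H. lra.
  - replace (-1*z1+-1*z2+1*z3) with (-(z1+z2-z3)) by ring. rewrite sin_neg, Rabs_Ropp.
    apply Lppm; auto.
  - replace (-1*z1+-1*z2+-1*z3) with (-(z1+z2+z3)) by ring. rewrite sin_neg, Rabs_Ropp.
    apply Lppp; auto.
Qed.

Lemma reduce : forall x, 0 < x < PI -> exists z e a, 0 <= z <= PI/2 /\ (e = 1 \/ e = -1) /\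
  x = IZR a * PI + e * z /\ sin x = sin z.
Proof.
  intros x Hx. destruct (Rle_dec x (PI/2)).
  - exists x, 1, 0%Z. split; [lra|]. split; [auto|]. split; [simpl; ring| auto].
  - exists (PI - x), (-1), 1%Z. split; [lra|]. split; [auto|]. split; [simpl; ring|].
    rewrite sin_PI_x; auto.
Qed.

Lemma Lmain : forall x1 x2 x3, 0 < x1 < PI -> 0 < x2 < PI -> 0 < x3 < PI ->
  prod3 (sin x1) (sin x2) (sin x3) / 32 <=
  sin x1 + sin x2 + sin x3 - Rabs (sin (x1+x2+x3)).
Proof.
  intros x1 x2 x3 H1 H2 H3.
  destruct (reduce x1 H1) as (z1 & e1 & a1 & Z1 & E1 & X1 & S1).
  destruct (reduce x2 H2) as (z2 & e2 & a2 & Z2 & E2 & X2 & S2).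
  destruct (reduce x3 H3) as (z3 & e3 & a3 & Z3 & E3 & X3 & S3).
  replace (x1+x2+x3) with ((e1*z1+e2*z2+e3*z3) + IZR (a1+a2+a3) * PI)
    by (rewrite !plus_IZR; lra).
  rewrite abs_sin_shift, S1, S2, S3. apply Lz; auto.
Qed.


Lemma div_le_div : forall X Y M Z, 0 <= X -> 0 < Y -> 0 < Z -> X * Z <= M * Y -> X / Y <= M / Z.
Proof.
  intros X Y M Z HX HY HZ H.
  apply (Rmult_le_reg_r (Y*Z)); [nra|].
  replace (X / Y * (Y * Z)) with (X * Z) by (field; lra).
  replace (M / Z * (Y * Z)) with (M * Y) by (field; lra). lra.
Qed.

Lemma key1 : forall K c s1 a b d T den, 0 < c -> 0 < a -> 0 < b -> 0 < d -> 0 <= s1 -> 0 <= K ->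
  T^2 <= K * c^4 * (s1*a*b*d) -> den^2 = c^2 * (a+b+d-s1)^2 ->
  prod3 a b d / 32 <= a+b+d-s1 ->
  Rabs (- T / den) ^ 2 <= 2048 * K * c^2 / (b+d)^2.
Proof.
  intros K c s1 a b d T den Hc Ha Hb Hd Hs HK HT Hden HD. unfold prod3 in HD.
  set (D := a+b+d-s1) in *. assert (HDdef : D = a+b+d-s1) by reflexivity. clearbody D.
  assert (HP : 0 < (a+b)*(b+d)*(a+d)) by (repeat apply Rmult_lt_0_compat; lra).
  assert (HDp : 0 < D) by lra.
  assert (Hden0 : 0 < den^2) by (rewrite Hden; apply Rmult_lt_0_compat; apply pow_lt; lra).
  assert (den <> 0) by (intro E; rewrite E in Hden0; lra).
  rewrite pow2_abs.
  replace ((- T / den)^2) with (T^2 / den^2) by (field; auto).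
  apply div_le_div; [nra| lra | nra |].
  rewrite Hden.
  assert (s1 <= a+b+d) by lra.
  assert (E1 : s1*a*b*d <= (a+b+d)*a*b*d).
  { assert (0 <= a*b*d) by (repeat apply Rmult_le_pos; lra).
    replace (s1*a*b*d) with (s1*(a*b*d)) by ring.
    replace ((a+b+d)*a*b*d) with ((a+b+d)*(a*b*d)) by ring.
    apply Rmult_le_compat_r; lra. }
  assert (E2 : (a+b+d)*a*b*d <= 2 * (a+b)^2 * (a+d)^2).
  { assert (a*(a+b+d) <= 2*(a+b)*(a+d)) by nra.
    assert (b*d <= (a+b)*(a+d)) by nra.
    assert (0 <= b*d) by nra.
    assert (0 <= (a+b)*(a+d)) by nra.
    nra. }
  assert (E3 : ((a+b)*(b+d)*(a+d))^2 <= 1024 * D^2).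
  { assert (0 <= (a+b)*(b+d)*(a+d) <= 32 * D) by lra. nra. }
  assert (E4 : s1*a*b*d*(b+d)^2 <= 2048 * D^2).
  { assert (0 <= (b+d)^2) by nra. 
    assert (s1*a*b*d*(b+d)^2 <= 2 * (a+b)^2 * (a+d)^2 * (b+d)^2) by nra.
    nra. }
  assert (0 <= K * c^4) by (apply Rmult_le_pos; [lra| apply pow_le; lra]).
  assert (T^2 * (b+d)^2 <= K * c^4 * (s1*a*b*d) * (b+d)^2) by (apply Rmult_le_compat_r; nra).
  assert (K * c^4 * (s1*a*b*d*(b+d)^2) <= K*c^4*(2048*D^2)) by (apply Rmult_le_compat_l; lra).
  nra.
Qed.

Lemma key3 : forall K c s1 a b d T den, 0 < c -> 0 < a -> 0 < b -> 0 < d -> 0 < s1 -> 0 <= K ->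
  b <= 1 -> d <= 1 ->
  T^2 <= K * c^4 * (s1*a*b*d) -> den = c * (s1+a+b+d) ->
  Rabs (- T / den) ^ 2 <= 2048 * K * c^2 / (b+d)^2.
Proof.
  intros K c s1 a b d T den Hc Ha Hb Hd Hs HK Hb1 Hd1 HT Hden.
  assert (den <> 0) by (rewrite Hden; apply Rgt_not_eq; apply Rmult_lt_0_compat; lra).
  rewrite pow2_abs.
  replace ((- T / den)^2) with (T^2 / den^2) by (field; auto).
  assert (0 < den^2) by (rewrite <- Rsqr_pow2; apply Rsqr_pos_lt; auto).
  apply div_le_div; [nra| lra | nra |].
  rewrite Hden. set (S := s1+a+b+d).
  assert (E1 : s1 * a <= S^2) by (unfold S; nra).
  assert (E2 : b*d*(b+d)^2 <= 4).
  { assert (b*d <= 1) by nra. assert ((b+d)^2 <= 4) by nra.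
    replace 4 with (1*4) by ring. apply Rmult_le_compat; nra. }
  assert (E4 : s1*a*b*d*(b+d)^2 <= 2048 * S^2).
  { assert (0 <= b*d*(b+d)^2) by (apply Rmult_le_pos; nra).
    assert (s1*a*(b*d*(b+d)^2) <= S^2 * 4) by (apply Rmult_le_compat; nra). nra. }
  assert (0 <= K * c^4) by (apply Rmult_le_pos; [lra| apply pow_le; lra]).
  assert (T^2 * (b+d)^2 <= K * c^4 * (s1*a*b*d) * (b+d)^2) by (apply Rmult_le_compat_r; nra).
  assert (K * c^4 * (s1*a*b*d*(b+d)^2) <= K*c^4*(2048*S^2)) by (apply Rmult_le_compat_l; lra).
  nra.
Qed.


Lemma iota_sq : forall N x, 0 <= iota N x ^ 2 <= 1.
Proof. intros. unfold iota, sgn. destruct (Rlt_dec _ _); [|destruct (Rlt_dec _ _)]; lra. Qed.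

Lemma omega_nn : forall kappa m N k, 0 <= omega kappa m N k.
Proof.
  intros. unfold omega. apply Rmult_le_pos; [|apply Rabs_pos].
  pose proof (sqrt_pos (kappa/m)). lra.
Qed.

Lemma omega_opp : forall kappa m N k, omega kappa m N (- k) = omega kappa m N k.
Proof.
  intros. unfold omega. rewrite opp_IZR.
  replace (PI * - IZR k / IZR N) with (- (PI * IZR k / IZR N)) by (unfold Rdiv; ring).
  rewrite sin_neg, Rabs_Ropp. reflexivity.
Qed.

Lemma unit_mul : forall a b, 0 <= a <= 1 -> 0 <= b <= 1 -> 0 <= a*b <= 1.
Proof. intros a b Ha Hb. split; [apply Rmult_le_pos; lra|]. replace 1 with (1*1) by ring. apply Rmult_le_compat; lra. Qed.

Lemma T_sq : forall kappa m N k1 k2 k3 k4,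
  (T kappa m N k1 k2 k3 k4)^2 <= (3 / (4 * kappa^2))^2 *
   (omega kappa m N k1 * omega kappa m N k2 * omega kappa m N k3 * omega kappa m N k4).
Proof.
  intros. unfold T.
  pose proof (omega_nn kappa m N k1) as W1; pose proof (omega_nn kappa m N k2) as W2;
  pose proof (omega_nn kappa m N k3) as W3; pose proof (omega_nn kappa m N k4) as W4.
  pose proof (sqrt_sqrt _ W1) as R1; pose proof (sqrt_sqrt _ W2) as R2;
  pose proof (sqrt_sqrt _ W3) as R3; pose proof (sqrt_sqrt _ W4) as R4.
  set (w1 := omega kappa m N k1) in *; set (w2 := omega kappa m N k2) in *;
  set (w3 := omega kappa m N k3) in *; set (w4 := omega kappa m N k4) in *.
  set (K0 := 3 / (4 * kappa^2)).
  pose proof (iota_sq N (k2+k3+k4)) as I1; pose proof (iota_sq N k2) as I2;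
  pose proof (iota_sq N k3) as I3; pose proof (iota_sq N k4) as I4.
  set (i1 := iota N (k2+k3+k4)) in *; set (i2 := iota N k2) in *;
  set (i3 := iota N k3) in *; set (i4 := iota N k4) in *.
  replace ((- K0 * i1 * i2 * i3 * i4 * (sqrt w1 * sqrt w2 * sqrt w3 * sqrt w4)) ^ 2) with
    (K0^2 * ((i1^2 * i2^2) * (i3^2 * i4^2)) * ((sqrt w1 * sqrt w1) * (sqrt w2 * sqrt w2) * (sqrt w3 * sqrt w3) * (sqrt w4 * sqrt w4))) by ring.
  rewrite R1, R2, R3, R4.
  assert (0 <= w1*w2*w3*w4) by (apply Rmult_le_pos; [apply Rmult_le_pos; [apply Rmult_le_pos; assumption|assumption]|assumption]).
  pose proof (unit_mul _ _ (unit_mul _ _ I1 I2) (unit_mul _ _ I3 I4)) as II.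
  set (J := i1 ^ 2 * i2 ^ 2 * (i3 ^ 2 * i4 ^ 2)) in *.
  assert (0 <= K0^2) by apply pow2_ge_0.
  assert (K0^2 * J <= K0^2) by nra.
  assert (0 <= K0^2 * J) by nra.
  set (W := w1*w2*w3*w4) in *.
  replace (K0 ^ 2 * J * (w1 * w2 * w3 * w4)) with (K0^2 * J * W) by reflexivity.
  apply Rmult_le_compat_r; lra.
Qed.

Definition xs (N k : Z) : R := PI * IZR k / IZR N.
Definition cc (kappa m : R) : R := 2 * sqrt (kappa / m).
Definition KK (kappa : R) : R := (3 / (4 * kappa^2))^2.
Definition MM (kappa m : R) : R := 2048 * KK kappa * cc kappa m ^ 2.

Lemma cc_pos : forall kappa m, 0 < kappa -> 0 < m -> 0 < cc kappa m.
Proof.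
  intros. unfold cc. assert (0 < sqrt (kappa/m)) by (apply sqrt_lt_R0; apply Rdiv_lt_0_compat; lra). lra.
Qed.

Lemma xs_range : forall N k, (0 < k < N)%Z -> 0 < xs N k < PI.
Proof.
  intros N k Hk. unfold xs. pose proof PI_RGT_0.
  assert (0 < IZR k) by (apply IZR_lt; lia).
  assert (IZR k < IZR N) by (apply IZR_lt; lia).
  split.
  - apply Rdiv_lt_0_compat; nra.
  - apply (Rmult_lt_reg_r (IZR N)); [lra|]. field_simplify; nra.
Qed.

Lemma omega_eq : forall kappa m N k, (0 < k < N)%Z ->
  omega kappa m N k = cc kappa m * sin (xs N k).
Proof.
  intros. unfold omega, cc, xs. rewrite Rabs_right; [reflexivity|].
  apply Rle_ge, Rlt_le, sin_gt_0; apply (xs_range N k H).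
Qed.

Lemma modrel : forall N a, (0 < N)%Z -> (a mod N = 0)%Z -> exists q, a = (q * N)%Z.
Proof.
  intros N a HN H. apply Z.mod_divide in H; [|lia]. destruct H as [q Hq]. exists q. exact Hq.
Qed.

Lemma xs_shift : forall N k1 j q, (0 < N)%Z -> k1 = (j + q * N)%Z ->
  xs N k1 = xs N j + IZR q * PI.
Proof.
  intros N k1 j q HN E. subst k1. unfold xs. rewrite plus_IZR, mult_IZR.
  assert (IZR N <> 0) by (apply not_0_IZR; lia). field. auto.
Qed.

Lemma xs_add : forall N a b c, xs N (a + b + c) = xs N a + xs N b + xs N c.
Proof. intros. unfold xs. rewrite !plus_IZR. unfold Rdiv. ring. Qed.

Lemma A1_bound : forall kappa m N k1 k2 k3 k4, 0 < kappa -> 0 < m -> (2 <= N)%Z ->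
  (0 < k1 < N)%Z -> (0 < k2 < N)%Z -> (0 < k3 < N)%Z -> (0 < k4 < N)%Z ->
  ((k1 - k2 - k3 - k4) mod N = 0)%Z ->
  Rabs (Defs.A1 kappa m N k1 k2 k3 k4) ^ 2 <= MM kappa m / (sin (xs N k3) + sin (xs N k4))^2.
Proof.
  intros kappa m N k1 k2 k3 k4 Hk Hm HN H1 H2 H3 H4 Hc.
  destruct (modrel N _ ltac:(lia) Hc) as [q Hq].
  assert (X1 : xs N k1 = xs N (k2+k3+k4) + IZR q * PI) by (apply xs_shift; lia).
  rewrite xs_add in X1.
  pose proof (xs_range N k1 H1) as R1; pose proof (xs_range N k2 H2) as R2;
  pose proof (xs_range N k3 H3) as R3; pose proof (xs_range N k4 H4) as R4.
  assert (S1 : sin (xs N k1) = Rabs (sin (xs N k2 + xs N k3 + xs N k4))).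
  { rewrite <- abs_sin_shift with (k := q), <- X1. rewrite Rabs_right; auto.
    apply Rle_ge, Rlt_le, sin_gt_0; lra. }
  pose proof (Lmain _ _ _ R2 R3 R4) as L. rewrite <- S1 in L.
  pose proof (T_sq kappa m N k1 k2 k3 k4) as TS.
  unfold Defs.A1. rewrite !omega_eq in * by auto.
  pose proof (cc_pos kappa m Hk Hm).
  unfold MM, KK.
  apply key1 with (s1 := sin (xs N k1)) (a := sin (xs N k2)); auto.
  - apply sin_gt_0; lra.
  - apply sin_gt_0; lra.
  - apply sin_gt_0; lra.
  - apply Rlt_le, sin_gt_0; lra.
  - apply pow2_ge_0.
  - lra.
  - ring.
Qed.

Lemma A2_bound : forall kappa m N k1 k2 k3 k4, 0 < kappa -> 0 < m -> (2 <= N)%Z ->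
  (0 < k1 < N)%Z -> (0 < k2 < N)%Z -> (0 < k3 < N)%Z -> (0 < k4 < N)%Z ->
  ((k1 - k2 + k3 + k4) mod N = 0)%Z ->
  Rabs (Defs.A2 kappa m N k1 k2 k3 k4) ^ 2 <= MM kappa m / (sin (xs N k3) + sin (xs N k4))^2.
Proof.
  intros kappa m N k1 k2 k3 k4 Hk Hm HN H1 H2 H3 H4 Hc.
  destruct (modrel N _ ltac:(lia) Hc) as [q Hq].
  assert (X2 : xs N k2 = xs N (k1+k3+k4) + IZR (-q) * PI) by (apply xs_shift; lia).
  rewrite xs_add in X2.
  pose proof (xs_range N k1 H1) as R1; pose proof (xs_range N k2 H2) as R2;
  pose proof (xs_range N k3 H3) as R3; pose proof (xs_range N k4 H4) as R4.
  assert (S2 : sin (xs N k2) = Rabs (sin (xs N k1 + xs N k3 + xs N k4))).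
  { rewrite <- abs_sin_shift with (k := (-q)%Z), <- X2. rewrite Rabs_right; auto.
    apply Rle_ge, Rlt_le, sin_gt_0; lra. }
  pose proof (Lmain _ _ _ R1 R3 R4) as L. rewrite <- S2 in L.
  pose proof (T_sq kappa m N k1 (-k2) k3 k4) as TS. rewrite omega_opp in TS.
  unfold Defs.A2. rewrite !omega_eq in * by auto.
  pose proof (cc_pos kappa m Hk Hm).
  unfold MM, KK.
  apply key1 with (s1 := sin (xs N k2)) (a := sin (xs N k1)); auto.
  - apply sin_gt_0; lra.
  - apply sin_gt_0; lra.
  - apply sin_gt_0; lra.
  - apply Rlt_le, sin_gt_0; lra.
  - apply pow2_ge_0.
  - lra.
  - ring.
Qed.

Lemma A3_bound : forall kappa m N k1 k2 k3 k4, 0 < kappa -> 0 < m -> (2 <= N)%Z ->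
  (0 < k1 < N)%Z -> (0 < k2 < N)%Z -> (0 < k3 < N)%Z -> (0 < k4 < N)%Z ->
  Rabs (Defs.A3 kappa m N k1 k2 k3 k4) ^ 2 <= MM kappa m / (sin (xs N k3) + sin (xs N k4))^2.
Proof.
  intros kappa m N k1 k2 k3 k4 Hk Hm HN H1 H2 H3 H4.
  pose proof (xs_range N k1 H1) as R1; pose proof (xs_range N k2 H2) as R2;
  pose proof (xs_range N k3 H3) as R3; pose proof (xs_range N k4 H4) as R4.
  pose proof (T_sq kappa m N k1 k2 k3 k4) as TS.
  unfold Defs.A3. rewrite !omega_eq in * by auto.
  pose proof (cc_pos kappa m Hk Hm).
  pose proof (SIN_bound (xs N k3)); pose proof (SIN_bound (xs N k4)).
  unfold MM, KK.
  apply key3 with (s1 := sin (xs N k1)) (a := sin (xs N k2)); auto.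
  - apply sin_gt_0; lra.
  - apply sin_gt_0; lra.
  - apply sin_gt_0; lra.
  - apply sin_gt_0; lra.
  - apply pow2_ge_0.
  - lra.
  - lra.
  - lra.
  - ring.
Qed.

Lemma sin_lb_third : forall a, 0 <= a <= 2 -> a/3 <= sin_lb a.
Proof.
  intros a Ha. unfold sin_lb, sin_approx, sin_term. cbn [sum_f_R0].
  replace (INR (fact (2*0+1))) with 1 by (simpl; ring).
  replace (INR (fact (2*1+1))) with 6 by (simpl; ring).
  replace (INR (fact (2*2+1))) with 120 by (rewrite INR_IZR_INZ; reflexivity).
  replace (INR (fact (2*3+1))) with 5040 by (rewrite INR_IZR_INZ; reflexivity).
  simpl. 
  assert (0 <= a^2 <= 4) by nra.
  assert (0 <= a^5/120 - a^7/5040).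
  { replace (a^5/120 - a^7/5040) with (a^5 * (42 - a^2)/5040) by field.
    apply Rmult_le_pos; [apply Rmult_le_pos; [apply pow_le; lra|lra]|lra]. }
  nra.
Qed.

Lemma sin_low : forall N k, (0 < k < N)%Z -> exists j, (j = k \/ j = N - k)%Z /\ (0 < j)%Z /\
  IZR j / IZR N <= sin (xs N k).
Proof.
  intros N k Hk. pose proof PI2_3_2. pose proof PI_4.
  assert (HN : 0 < IZR N) by (apply IZR_lt; lia).
  assert (G : forall j, (0 < j)%Z -> (2 * j <= N)%Z -> IZR j / IZR N <= sin (xs N j)).
  { intros j Hj Hj2. assert (0 < IZR j) by (apply IZR_lt; lia).
    assert (2 * IZR j <= IZR N) by (rewrite <- mult_IZR; apply IZR_le; lia).
    assert (X: 0 <= xs N j <= PI/2).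
    { unfold xs. split. apply Rmult_le_pos; [nra| apply Rlt_le, Rinv_0_lt_compat; lra].
      apply (Rmult_le_reg_r (IZR N)); [lra|]. field_simplify; nra. }
    pose proof (SIN (xs N j) ltac:(lra) ltac:(lra)) as [S _].
    pose proof (sin_lb_third (xs N j) ltac:(lra)).
    assert (IZR j / IZR N <= xs N j / 3).
    { unfold xs. apply (Rmult_le_reg_r (3 * IZR N)); [lra|]. field_simplify; nra. }
    lra. }
  destruct (Z_le_gt_dec (2*k) N).
  - exists k. split; [auto|]. split; [lia|]. apply G; lia.
  - exists (N - k)%Z. split; [auto|]. split; [lia|].
    replace (sin (xs N k)) with (sin (xs N (N - k))). apply G; lia.
    unfold xs. rewrite minus_IZR. replace (PI * (IZR N - IZR k) / IZR N) with (PI - PI * IZR k / IZR N)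
      by (field; lra). apply sin_PI_x.
Qed.

Definition gg (a : Z) : R := / (IZR a)^2.

Lemma gg_nn : forall a, 0 <= gg a.
Proof. intros. unfold gg. destruct (Req_dec (IZR a) 0) as [E|E].
  - rewrite E. replace (0^2) with 0 by ring. rewrite Rinv_0. lra.
  - apply Rlt_le, Rinv_0_lt_compat. apply pow_lt_0_compat_2 || nra. Qed.

Definition F4 (N a b : Z) : R :=
  gg (a + b) + gg (a + (N - b)) + gg ((N - a) + b) + gg ((N - a) + (N - b)).

Lemma pair_bound : forall M N k3 k4, 0 <= M -> (0 < k3 < N)%Z -> (0 < k4 < N)%Z ->
  M / (sin (xs N k3) + sin (xs N k4))^2 <= M * (IZR N ^ 2 * F4 N k3 k4).
Proof.
  intros M N k3 k4 HM H3 H4.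
  destruct (sin_low N k3 H3) as (j3 & E3 & P3 & L3).
  destruct (sin_low N k4 H4) as (j4 & E4 & P4 & L4).
  assert (HN : 0 < IZR N) by (apply IZR_lt; lia).
  assert (Hj : 0 < IZR j3 + IZR j4) by (assert (0 < IZR j3) by (apply IZR_lt; lia);
     assert (0 < IZR j4) by (apply IZR_lt; lia); lra).
  assert (Hg : gg (j3 + j4) <= F4 N k3 k4).
  { pose proof (gg_nn (k3+k4)); pose proof (gg_nn (k3 + (N-k4)));
    pose proof (gg_nn ((N-k3)+k4)); pose proof (gg_nn ((N-k3)+(N-k4))).
    unfold F4. destruct E3 as [-> | ->]; destruct E4 as [-> | ->]; lra. }
  assert (Hs : (IZR j3 + IZR j4) / IZR N <= sin (xs N k3) + sin (xs N k4)).
  { replace ((IZR j3 + IZR j4) / IZR N) with (IZR j3 / IZR N + IZR j4 / IZR N) by (field; lra). lra. }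
  assert (Hp : 0 < (IZR j3 + IZR j4) / IZR N) by (apply Rdiv_lt_0_compat; lra).
  assert (IZR N ^ 2 * gg (j3 + j4) = / ((IZR j3 + IZR j4) / IZR N)^2).
  { unfold gg. rewrite plus_IZR. field. lra. }
  assert (/ (sin (xs N k3) + sin (xs N k4))^2 <= / ((IZR j3 + IZR j4) / IZR N)^2).
  { apply Rinv_le_contravar. apply pow_lt; lra. apply pow_incr; lra. }
  assert (0 <= IZR N ^ 2) by apply pow2_ge_0.
  unfold Rdiv. apply Rmult_le_compat_l; auto. nra.
Qed.


Lemma sumZ_nil : forall f, sumZ nil f = 0.
Proof. reflexivity. Qed.
Lemma sumZ_cons : forall x l f, sumZ (x :: l) f = f x + sumZ l f.
Proof. reflexivity. Qed.
Lemma sumZ_app : forall l1 l2 f, sumZ (l1 ++ l2) f = sumZ l1 f + sumZ l2 f.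
Proof. induction l1; intros. simpl. rewrite sumZ_nil. ring. simpl. rewrite !sumZ_cons, IHl1. ring. Qed.

Lemma sumZ_le : forall l f g, (forall x, In x l -> f x <= g x) -> sumZ l f <= sumZ l g.
Proof.
  induction l; intros f g H. unfold sumZ; simpl; lra.
  rewrite !sumZ_cons. apply Rplus_le_compat. apply H; simpl; auto.
  apply IHl. intros; apply H; simpl; auto.
Qed.

Lemma sumZ_ext : forall l f g, (forall x, In x l -> f x = g x) -> sumZ l f = sumZ l g.
Proof.
  intros. apply Rle_antisym; apply sumZ_le; intros; rewrite H; auto; lra.
Qed.

Lemma sumZ_plus : forall l f g, sumZ l (fun x => f x + g x) = sumZ l f + sumZ l g.
Proof. induction l; intros. unfold sumZ; simpl; ring. rewrite !sumZ_cons, IHl. ring. Qed.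

Lemma sumZ_scal : forall l c f, sumZ l (fun x => c * f x) = c * sumZ l f.
Proof. induction l; intros. unfold sumZ; simpl; ring. rewrite !sumZ_cons, IHl. ring. Qed.

Lemma sumZ_zero : forall l f, (forall x, In x l -> f x = 0) -> sumZ l f = 0.
Proof.
  intros. rewrite (sumZ_ext l f (fun _ => 0)) by auto.
  induction l. reflexivity. rewrite sumZ_cons, IHl. ring. intros; apply H; simpl; auto.
Qed.

Lemma sumZ_swap : forall l l' (F : Z -> Z -> R),
  sumZ l (fun a => sumZ l' (fun b => F a b)) = sumZ l' (fun b => sumZ l (fun a => F a b)).
Proof.
  induction l; intros.
  - rewrite sumZ_nil. symmetry. apply sumZ_zero. intros; reflexivity.
  - rewrite sumZ_cons, IHl. rewrite <- sumZ_plus. apply sumZ_ext. intros. rewrite sumZ_cons. reflexivity.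
Qed.

Lemma sumZ_map : forall (g : nat -> Z) l f, sumZ (map g l) f = fold_right Rplus 0 (map (fun x => f (g x)) l).
Proof. intros. unfold sumZ. rewrite map_map. reflexivity. Qed.

Lemma sumZ_unique : forall l (h : Z -> Z) B, NoDup l -> 0 <= B ->
  (forall x y, In x l -> In y l -> h x = 0%Z -> h y = 0%Z -> x = y) ->
  sumZ l (fun k => if Z.eq_dec (h k) 0 then B else 0) <= B.
Proof.
  induction l; intros h B ND HB U.
  - rewrite sumZ_nil; lra.
  - rewrite sumZ_cons. apply NoDup_cons_iff in ND as [Na ND].
    destruct (Z.eq_dec (h a) 0) as [E|E].
    + rewrite sumZ_zero. lra. intros y Hy. destruct (Z.eq_dec (h y) 0) as [E'|E']; auto.
      exfalso. apply Na. replace a with y; auto. apply U; simpl; auto.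
    + assert (sumZ l (fun k => if Z.eq_dec (h k) 0 then B else 0) <= B).
      { apply IHl; auto. intros; apply U; simpl; auto. }
      lra.
Qed.

Lemma range_eq : forall N, range N = map Z.of_nat (seq 1 (Z.to_nat N - 1)).
Proof. reflexivity. Qed.

Lemma in_range : forall N k, (1 <= N)%Z -> In k (range N) <-> (0 < k < N)%Z.
Proof.
  intros N k HN. unfold range. rewrite in_map_iff. split.
  - intros [n [E Hn]]. apply in_seq in Hn. lia.
  - intros Hk. exists (Z.to_nat k). split; [lia|]. apply in_seq. lia.
Qed.

Lemma range_nodup : forall N, NoDup (range N).
Proof.
  intros. unfold range. apply NoDup_map_NoDup_ForallPairs.
  - intros x y _ _ E. lia.
  - apply seq_NoDup.
Qed.


Lemma sumZ_map_ext : forall (g : nat -> Z) l f f', (forall x, f (g x) = f' (Z.of_nat x)) ->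
  sumZ (map g l) f = sumZ (map Z.of_nat l) f'.
Proof.
  intros. rewrite !sumZ_map. f_equal. apply map_ext. auto.
Qed.

Lemma refl_seq : forall n (f : Z -> R),
  sumZ (map Z.of_nat (seq 1 n)) (fun k => f (Z.of_nat n + 1 - k)%Z) = sumZ (map Z.of_nat (seq 1 n)) f.
Proof.
  induction n; intros f. reflexivity.
  replace (seq 1 (S n)) with (1%nat :: seq 2 n) at 1 by reflexivity.
  rewrite map_cons, sumZ_cons, <- seq_shift, map_map.
  rewrite (sumZ_map_ext (fun x => Z.of_nat (S x)) (seq 1 n) _ (fun k => f (Z.of_nat n + 1 - k)%Z)).
  2:{ intros x. f_equal. lia. }
  rewrite IHn. rewrite seq_S, map_app, sumZ_app. cbn [map]. rewrite sumZ_cons, sumZ_nil.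
  rewrite Rplus_0_r. match goal with |- ?a + ?b = ?b + ?c => replace a with c by (f_equal; lia) end. ring.
Qed.

Lemma reflect : forall N f, (1 <= N)%Z -> sumZ (range N) (fun k => f (N - k)%Z) = sumZ (range N) f.
Proof.
  intros N f HN. rewrite range_eq.
  rewrite <- refl_seq. apply sumZ_ext. intros x _. f_equal. lia.
Qed.

Lemma tele : forall n c, (1 <= c)%Z ->
  sumZ (map Z.of_nat (seq 1 n)) (fun k => gg (c + k)) <= / IZR c - / (IZR c + INR n).
Proof.
  intros n c Hc. assert (1 <= IZR c) by (apply IZR_le; lia).
  induction n.
  - simpl. rewrite sumZ_nil. rewrite Rplus_0_r. lra.
  - rewrite seq_S, map_app, sumZ_app. cbn [map]. rewrite sumZ_cons, sumZ_nil.
    assert (G : gg (c + Z.of_nat (1 + n)) = / (IZR c + INR n + 1)^2).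
    { unfold gg. rewrite plus_IZR, <- INR_IZR_INZ, plus_INR. simpl (INR 1). f_equal. ring. }
    rewrite G.
    replace (INR (S n)) with (INR n + 1) by (rewrite S_INR; ring).
    set (y := IZR c + INR n) in *.
    assert (1 <= y) by (unfold y; pose proof (pos_INR n); lra).
    replace (IZR c + (INR n + 1)) with (y + 1) by (unfold y; ring).
    assert (/ (y+1)^2 <= / y - / (y+1)).
    { replace (/ y - / (y+1)) with (/ (y * (y+1))) by (field; lra).
      apply Rinv_le_contravar; nra. }
    lra.
Qed.

Lemma ln_step : forall y, 0 < y -> / (y+1) <= ln (y+1) - ln y.
Proof.
  intros y Hy. pose proof (exp_ineq1_le (ln y - ln (y+1))).
  replace (ln y - ln (y+1)) with (ln y + - ln (y+1)) in H by ring.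
  rewrite exp_plus, exp_Ropp, !exp_ln in H by lra.
  replace (y * / (y+1)) with (1 - / (y+1)) in H by (field; lra). lra.
Qed.

Lemma harm : forall n, sumZ (map Z.of_nat (seq 1 (S n))) (fun k => / IZR k) <= 1 + ln (INR (S n)).
Proof.
  induction n.
  - simpl. rewrite sumZ_cons, sumZ_nil. rewrite ln_1. simpl. rewrite Rinv_1. lra.
  - rewrite seq_S, map_app, sumZ_app. cbn [map]. rewrite sumZ_cons, sumZ_nil.
    rewrite <- INR_IZR_INZ. 
    replace (INR (1 + S n)) with (INR (S n) + 1) by (rewrite plus_INR; simpl; ring).
    replace (INR (S (S n))) with (INR (S n) + 1) by (rewrite (S_INR (S n)); ring).
    pose proof (ln_step (INR (S n)) ltac:(apply lt_0_INR; lia)). lra.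
Qed.

Lemma dsum : forall N, (2 <= N)%Z ->
  sumZ (range N) (fun a => sumZ (range N) (fun b => gg (a + b))) <= 1 + ln (IZR N).
Proof.
  intros N HN.
  apply Rle_trans with (sumZ (range N) (fun a => / IZR a)).
  - apply sumZ_le. intros a Ha. apply in_range in Ha; [|lia].
    rewrite range_eq. pose proof (tele (Z.to_nat N - 1) a ltac:(lia)).
    assert (0 < IZR a) by (apply IZR_lt; lia).
    assert (0 <= / (IZR a + INR (Z.to_nat N - 1))).
    { apply Rlt_le, Rinv_0_lt_compat. pose proof (pos_INR (Z.to_nat N - 1)). lra. }
    lra.
  - rewrite range_eq. replace (Z.to_nat N - 1)%nat with (S (Z.to_nat N - 2)) by lia.
    eapply Rle_trans; [apply harm|].
    assert (INR (S (Z.to_nat N - 2)) < IZR N).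
    { rewrite INR_IZR_INZ. apply IZR_lt. lia. }
    assert (0 < INR (S (Z.to_nat N - 2))) by (apply lt_0_INR; lia).
    pose proof (ln_increasing _ _ H0 H). lra.
Qed.

Lemma F4sum : forall N, (2 <= N)%Z ->
  sumZ (range N) (fun a => sumZ (range N) (fun b => F4 N a b)) <= 4 * (1 + ln (IZR N)).
Proof.
  intros N HN.
  set (D := sumZ (range N) (fun a => sumZ (range N) (fun b => gg (a + b)))).
  assert (E : sumZ (range N) (fun a => sumZ (range N) (fun b => F4 N a b)) = 4 * D).
  { rewrite (sumZ_ext _ _ (fun a => sumZ (range N) (fun b => gg (a+b)) +
        sumZ (range N) (fun b => gg (a + (N-b))) + sumZ (range N) (fun b => gg ((N-a)+b)) +
        sumZ (range N) (fun b => gg ((N-a)+(N-b))))).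
    2:{ intros a _. unfold F4. rewrite !sumZ_plus. reflexivity. }
    rewrite !sumZ_plus.
    rewrite (sumZ_ext _ (fun a => sumZ (range N) (fun b => gg (a + (N - b))))
                        (fun a => sumZ (range N) (fun b => gg (a + b)))).
    2:{ intros a _. apply (reflect N (fun b => gg (a + b))). lia. }
    rewrite (sumZ_ext _ (fun a => sumZ (range N) (fun b => gg (N - a + (N - b))))
                        (fun a => sumZ (range N) (fun b => gg (N - a + b)))).
    2:{ intros a _. apply (reflect N (fun b => gg (N - a + b))). lia. }
    rewrite (reflect N (fun a => sumZ (range N) (fun b => gg (a + b)))) by lia.
    unfold D. ring. }
  rewrite E. pose proof (dsum N HN). fold D in H. lra.
Qed.


Lemma sum3_bound : forall N (c : Z -> Z -> Z -> Z) (f : Z -> Z -> Z -> R) (B : Z -> Z -> R),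
  (2 <= N)%Z ->
  (forall k3 k4, In k3 (range N) -> In k4 (range N) -> 0 <= B k3 k4) ->
  (forall k2 k3 k4, In k2 (range N) -> In k3 (range N) -> In k4 (range N) ->
     (c k2 k3 k4 mod N = 0)%Z -> f k2 k3 k4 <= B k3 k4) ->
  (forall k3 k4 x y, In k3 (range N) -> In k4 (range N) -> In x (range N) -> In y (range N) ->
     (c x k3 k4 mod N = 0)%Z -> (c y k3 k4 mod N = 0)%Z -> x = y) ->
  sum3 N c f <= sumZ (range N) (fun k3 => sumZ (range N) (fun k4 => B k3 k4)).
Proof.
  intros N c f B HN HB Hf U. unfold sum3.
  apply Rle_trans with (sumZ (range N) (fun k2 => sumZ (range N) (fun k3 => sumZ (range N) (fun k4 =>
     if Z.eq_dec (c k2 k3 k4 mod N) 0 then B k3 k4 else 0)))).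
  { apply sumZ_le; intros k2 H2; apply sumZ_le; intros k3 H3; apply sumZ_le; intros k4 H4.
    destruct (Z.eq_dec _ _). apply Hf; auto. lra. }
  rewrite sumZ_swap.
  rewrite (sumZ_ext _ _ (fun k3 => sumZ (range N) (fun k4 => sumZ (range N) (fun k2 =>
     if Z.eq_dec (c k2 k3 k4 mod N) 0 then B k3 k4 else 0)))).
  2:{ intros k3 _. apply sumZ_swap. }
  apply sumZ_le; intros k3 H3; apply sumZ_le; intros k4 H4.
  apply (sumZ_unique (range N) (fun k2 => (c k2 k3 k4 mod N)%Z) (B k3 k4)).
  - apply range_nodup.
  - auto.
  - intros x y Hx Hy Ex Ey. apply (U k3 k4 x y); auto.
Qed.

Lemma uniq_aux : forall N x y q q', (0 < x < N)%Z -> (0 < y < N)%Z ->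
  (x - y = (q - q') * N)%Z -> x = y.
Proof.
  intros N x y q q' Hx Hy E. set (d := (q - q')%Z) in *. clearbody d.
  destruct (Z.eq_dec d 0) as [e|ne]. { rewrite e in E. lia. }
  destruct (Z_lt_ge_dec d 0).
  - assert (d * N <= -1 * N)%Z by (apply Z.mul_le_mono_nonneg_r; lia). lia.
  - assert (1 * N <= d * N)%Z by (apply Z.mul_le_mono_nonneg_r; lia). lia.
Qed.

Lemma half_ln : forall N, (2 <= N)%Z -> 1/2 <= ln (IZR N).
Proof.
  intros N HN. assert (2 <= IZR N) by (apply IZR_le; lia).
  pose proof exp_le_3. assert (exp (1/2) * exp (1/2) = exp 1) by (rewrite <- exp_plus; f_equal; field).
  pose proof (exp_pos (1/2)).
  assert (exp (1/2) < IZR N) by nra.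
  pose proof (ln_increasing _ _ H2 H3). rewrite ln_exp in H4. lra.
Qed.

Theorem theorem1 :
  forall kappa m : R, 0 < kappa -> 0 < m ->
  exists C : R, 0 < C /\
    forall N k1 : Z, (2 <= N)%Z -> (0 < k1 < N)%Z ->
      Ssum kappa m N k1 <= C * IZR N ^ 2 * ln (IZR N).
Proof.
  intros kappa m Hk Hm.
  assert (HMM : 0 < MM kappa m).
  { unfold MM, KK. pose proof (cc_pos kappa m Hk Hm).
    assert (0 < 3 / (4 * kappa^2)) by (apply Rdiv_lt_0_compat; [lra| apply Rmult_lt_0_compat; [lra| apply pow_lt; lra]]).
    apply Rmult_lt_0_compat; [apply Rmult_lt_0_compat; [lra| apply pow_lt; lra]| apply pow_lt; lra]. }
  exists (36 * MM kappa m). split; [lra|].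
  intros N k1 HN Hk1.
  set (B := fun k3 k4 => MM kappa m / (sin (xs N k3) + sin (xs N k4))^2).
  assert (HB : forall k3 k4, In k3 (range N) -> In k4 (range N) -> 0 <= B k3 k4).
  { intros k3 k4 H3 H4. apply in_range in H3; [|lia]. apply in_range in H4; [|lia].
    pose proof (xs_range N k3 H3); pose proof (xs_range N k4 H4).
    assert (0 < sin (xs N k3)) by (apply sin_gt_0; lra).
    assert (0 < sin (xs N k4)) by (apply sin_gt_0; lra).
    unfold B. apply Rlt_le, Rdiv_lt_0_compat; auto. apply pow_lt; lra. }
  set (Zs := sumZ (range N) (fun k3 => sumZ (range N) (fun k4 => B k3 k4))).
  assert (S1 : sum3 N (fun k2 k3 k4 => k1 - k2 - k3 - k4)%Z
       (fun k2 k3 k4 => Rabs (Defs.A1 kappa m N k1 k2 k3 k4) ^ 2) <= Zs).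
  { apply sum3_bound; auto.
    - intros k2 k3 k4 H2 H3 H4 Hc. apply in_range in H2; [|lia]. apply in_range in H3; [|lia].
      apply in_range in H4; [|lia]. apply A1_bound; auto.
    - intros k3 k4 x y _ _ Hx Hy Ex Ey. apply in_range in Hx; [|lia]. apply in_range in Hy; [|lia].
      destruct (modrel N _ ltac:(lia) Ex) as [q Hq]. destruct (modrel N _ ltac:(lia) Ey) as [q' Hq'].
      apply (uniq_aux N x y q' q); auto. lia. }
  assert (S2 : sum3 N (fun k2 k3 k4 => k1 - k2 + k3 + k4)%Z
       (fun k2 k3 k4 => Rabs (Defs.A2 kappa m N k1 k2 k3 k4) ^ 2) <= Zs).
  { apply sum3_bound; auto.
    - intros k2 k3 k4 H2 H3 H4 Hc. apply in_range in H2; [|lia]. apply in_range in H3; [|lia].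
      apply in_range in H4; [|lia]. apply A2_bound; auto.
    - intros k3 k4 x y _ _ Hx Hy Ex Ey. apply in_range in Hx; [|lia]. apply in_range in Hy; [|lia].
      destruct (modrel N _ ltac:(lia) Ex) as [q Hq]. destruct (modrel N _ ltac:(lia) Ey) as [q' Hq'].
      apply (uniq_aux N x y q' q); auto. lia. }
  assert (S3 : sum3 N (fun k2 k3 k4 => k1 + k2 + k3 + k4)%Z
       (fun k2 k3 k4 => Rabs (Defs.A3 kappa m N k1 k2 k3 k4) ^ 2) <= Zs).
  { apply sum3_bound; auto.
    - intros k2 k3 k4 H2 H3 H4 Hc. apply in_range in H2; [|lia]. apply in_range in H3; [|lia].
      apply in_range in H4; [|lia]. apply A3_bound; auto.
    - intros k3 k4 x y _ _ Hx Hy Ex Ey. apply in_range in Hx; [|lia]. apply in_range in Hy; [|lia].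
      destruct (modrel N _ ltac:(lia) Ex) as [q Hq]. destruct (modrel N _ ltac:(lia) Ey) as [q' Hq'].
      apply (uniq_aux N x y q q'); auto. lia. }
  assert (HZ : Zs <= MM kappa m * IZR N ^ 2 * (4 * (1 + ln (IZR N)))).
  { unfold Zs.
    apply Rle_trans with (sumZ (range N) (fun k3 => sumZ (range N) (fun k4 =>
        (MM kappa m * IZR N ^ 2) * F4 N k3 k4))).
    { apply sumZ_le; intros k3 H3; apply sumZ_le; intros k4 H4.
      apply in_range in H3; [|lia]. apply in_range in H4; [|lia].
      unfold B. rewrite Rmult_assoc. apply pair_bound; auto. lra. }
    rewrite (sumZ_ext _ _ (fun k3 => (MM kappa m * IZR N ^ 2) * sumZ (range N) (fun k4 => F4 N k3 k4))).
    2:{ intros; apply sumZ_scal. }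
    rewrite sumZ_scal. pose proof (F4sum N HN).
    apply Rmult_le_compat_l; auto. apply Rmult_le_pos; [lra| apply pow2_ge_0]. }
  unfold Ssum. pose proof (half_ln N HN).
  assert (0 <= MM kappa m * IZR N ^ 2) by (apply Rmult_le_pos; [lra| apply pow2_ge_0]).
  assert (MM kappa m * IZR N ^ 2 * (4 * (1 + ln (IZR N))) <= 12 * MM kappa m * IZR N ^ 2 * ln (IZR N)).
  { assert (4 * (1 + ln (IZR N)) <= 12 * ln (IZR N)) by lra.
    replace (12 * MM kappa m * IZR N ^ 2 * ln (IZR N)) with (MM kappa m * IZR N ^ 2 * (12 * ln (IZR N))) by ring.
    apply Rmult_le_compat_l; auto. }
  lra.
Qed.
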